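(* For any join doctrine $\Phi$, we have $\omega\in\Phi$ if and only if $\omega\notin\Phi^*$.
   Context: A join doctrine is a class $\Phi$ of posets such that: (1) the one-element poset is in $\Phi$; (2) if a poset $P$ is the union of a set $\mathcal{S}$ of subposets each in $\Phi$ and $\mathcal{S}$ (ordered by inclusion) is in $\Phi$, then $P\in\Phi$; (3) if $f:P\to Q$ is monotone with cofinal image and $P\in\Phi$ then $Q\in\Phi$; (4) cofinal subposets of members of $\Phi$ are in $\Phi$. $\omega$ = natural numbers with usual order. $\Phi^*$ is the class of posets $\psi$ such that whenever $\psi=\bigcup\mathcal{S}$ for a set $\mathcal{S}$ of lower subsets of $\psi$ with $\mathcal{S}$ (ordered by inclusion) belonging to $\Phi$, some member of $\mathcal{S}$ equals $\psi$ (i.e. $\psi$ is a $\Phi$-compact element of the lattice of lower subsets of $\psi$). *)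

(* Defs.v *)
From Stdlib Require Import Arith FunctionalExtensionality PropExtensionality ProofIrrelevance.

Record poset := Poset {
  carrier :> Type;
  le : carrier -> carrier -> Prop;
  le_refl : forall x, le x x;
  le_trans : forall x y z, le x y -> le y z -> le x z;
  le_antisym : forall x y, le x y -> le y x -> x = y
}.

Arguments le {p} _ _.

Definition poset_class := poset -> Prop.

Definition one_poset : poset :=
  @Poset unit (fun _ _ => True) (fun _ => I) (fun _ _ _ _ _ => I)
    (fun x y _ _ => match x, y with tt, tt => eq_refl end).

Definition omega : poset :=
  @Poset nat Peano.le Nat.le_refl Nat.le_trans Nat.le_antisymm.

Definition subposet (P : poset) (A : P -> Prop) : poset.
Proof.
  refine (@Poset {x : P | A x} (fun x y => le (proj1_sig x) (proj1_sig y)) _ _ _).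
  - intros x; apply le_refl.
  - intros x y z; apply le_trans.
  - intros [x hx] [y hy] h1 h2; simpl in *.
    pose proof (le_antisym _ x y h1 h2) as e; subst y.
    f_equal; apply proof_irrelevance.
Defined.

Definition incl_poset (P : poset) (S : (P -> Prop) -> Prop) : poset.
Proof.
  refine (@Poset {A : P -> Prop | S A}
            (fun A B => forall x, proj1_sig A x -> proj1_sig B x) _ _ _).
  - intros A x h; exact h.
  - intros A B C h1 h2 x h; apply h2, h1, h.
  - intros [A hA] [B hB] h1 h2; simpl in *.
    assert (e : A = B).
    { apply functional_extensionality; intro x;
      apply propositional_extensionality; split; auto. }
    subst B; f_equal; apply proof_irrelevance.
Defined.

Definition monotone {P Q : poset} (f : P -> Q) : Prop :=
  forall x y, le x y -> le (f x) (f y).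

Definition cofinal_image {P Q : poset} (f : P -> Q) : Prop :=
  forall q : Q, exists p : P, le q (f p).

Definition cofinal_subset (P : poset) (A : P -> Prop) : Prop :=
  forall x : P, exists a, A a /\ le x a.

Definition lower_subset (P : poset) (A : P -> Prop) : Prop :=
  forall x y : P, A x -> le y x -> A y.

Definition join_doctrine (Phi : poset_class) : Prop :=
  Phi one_poset /\
  (forall (P : poset) (S : (P -> Prop) -> Prop),
      (forall x : P, exists A, S A /\ A x) ->
      (forall A, S A -> Phi (subposet P A)) ->
      Phi (incl_poset P S) ->
      Phi P) /\
  (forall (P Q : poset) (f : P -> Q),
      monotone f -> cofinal_image f -> Phi P -> Phi Q) /\
  (forall (P : poset) (A : P -> Prop),
      cofinal_subset P A -> Phi P -> Phi (subposet P A)).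

(* Phi^* : posets psi that are Phi-compact in their lattice of lower sets. *)
Definition dual_class (Phi : poset_class) : poset_class :=
  fun psi =>
    forall S : (psi -> Prop) -> Prop,
      (forall A, S A -> lower_subset psi A) ->
      (forall x : psi, exists A, S A /\ A x) ->
      Phi (incl_poset psi S) ->
      exists A, S A /\ forall x : psi, A x.

(* Main.v *)
Require Import Defs.
From Stdlib Require Import Arith Lia Classical ClassicalEpsilon.

Lemma lower_seg (A : nat -> Prop) :
  (forall x y : nat, A x -> y <= x -> A y) ->
  forall m, ~ A m -> exists n, forall k, A k <-> k < n.
Proof.
  intros HL m; induction m as [|m IH]; intros Hm.
  - exists 0; intros k; split; [intros Hk; exfalso; apply Hm; apply (HL k); [exact Hk|lia] | lia].
  - destruct (classic (A m)) as [Ha|Ha].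
    + exists (S m); intros k; split.
      * intros Hk. destruct (le_lt_dec (S m) k) as [h|h]; [|exact h].
        exfalso; apply Hm; apply (HL k); assumption.
      * intros Hk; apply (HL m); [exact Ha|lia].
    + apply IH; exact Ha.
Qed.

Theorem lemma3p6 (Phi : poset_class) :
  join_doctrine Phi -> (Phi omega <-> ~ dual_class Phi omega).
Proof.
  intros [H1 [H2 [H3 H4]]]; split.
  - intros Hw Hd.
    set (Sg := fun A : omega -> Prop => exists n : nat, A = fun k => k < n).
    assert (HPS : Phi (incl_poset omega Sg)).
    { pose (f := fun n : omega => (exist Sg (fun k => k < n) (ex_intro _ n eq_refl) : incl_poset omega Sg)).
      apply (H3 omega _ f); [| |exact Hw].
      - intros x y Hxy k Hk; simpl in *; lia.
      - intros [A [n HA]]; exists n; simpl; intros x Hx; subst A; exact Hx. }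
    destruct (Hd Sg) as [A [[n HA] Hall]].
    + intros A [n HA] x y Hx Hy; subst A; simpl in *; lia.
    + intros x; exists (fun k => k < S x); split; [exists (S x); reflexivity| simpl; lia].
    + exact HPS.
    + subst A; specialize (Hall n); simpl in Hall; lia.
  - intros Hnd.
    apply NNPP; intros Hw; apply Hnd; intros S Hlow Hcov HPS.
    apply NNPP; intros Hno.
    apply Hw.
    assert (Hex : forall A : incl_poset omega S, exists n : nat, forall k, proj1_sig A k <-> k < n).
    { intros [A HA]; simpl.
      assert (Hm : exists m, ~ A m).
      { apply NNPP; intros Hc; apply Hno; exists A; split; [exact HA|].
        intros x; apply NNPP; intros Hx; apply Hc; exists x; exact Hx. }
      destruct Hm as [m Hm]; apply (lower_seg A (Hlow A HA) m Hm). }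
    pose (g := fun A => proj1_sig (constructive_indefinite_description _ (Hex A))).
    assert (Hg : forall A k, proj1_sig A k <-> k < g A).
    { intros A; unfold g; destruct (constructive_indefinite_description _ (Hex A)); simpl; auto. }
    apply (H3 _ omega g); [| |exact HPS].
    + intros A B HAB; simpl in *.
      destruct (le_lt_dec (g A) (g B)) as [h|h]; [exact h|].
      exfalso. assert (proj1_sig A (g B)) by (apply Hg; exact h).
      assert (proj1_sig B (g B)) by (apply HAB; assumption).
      apply Hg in H0; lia.
    + intros q; destruct (Hcov q) as [A [HA Aq]].
      exists (exist S A HA).
      pose proof (proj1 (Hg (exist S A HA) q) Aq) as Hq; change (q <= g (exist S A HA)); apply Nat.lt_le_incl; exact Hq.
Qed.
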